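(* Let $t$ be a closed $\lambda$-term. If there are a value $v$ and a reduction sequence $t\to_{\beta_v}^* v$, then there is a derivation of $\vdash t:\mathtt{n}$ (empty type context) in the silly multi type system.
   Context: $\lambda$-terms $t ::= x\mid\lambda x.t\mid tu$; values are abstractions. CbV contexts $V ::= \langle\cdot\rangle\mid tV\mid Vt$; root rule $(\lambda x.t)v\mapsto_{\beta_v} t\{x:=v\}$ for $v$ a value; $\to_{\beta_v}$ is its closure under CbV contexts. Silly multi types: linear types $L ::= \mathtt{n} \mid M\multimap L$; multi types $M ::= [L_i]_{i\in I}$ finite multisets ($\mathbf{0}$ empty, $\uplus$ sum). Type contexts $\Gamma$ map variables to multi types with finite support; $\uplus$ pointwise; $\Gamma\setminus\!\!\setminus x$ sets $x$ to $\mathbf{0}$. Judgements $\Gamma\vdash^{(m,e)} t:T$, written $\Gamma\vdash t:T$ when indices are irrelevant. Rules: (ax) $x:[L]\vdash^{(0,1)} x:L$; (many) from $(\Gamma_i\vdash^{(m_i,e_i)} t : L_i)_{i\in I}$, $I$ finite possibly empty, infer $\uplus_i\Gamma_i\vdash^{(\sum m_i,\sum e_i)} t : [L_i]_{i\in I}$; ($\mathrm{ax}_\lambda$) $\vdash^{(0,0)}\lambda x.t:\mathtt{n}$; ($\lambda$) from $\Gamma\vdash^{(m,e)}t:L$ infer $\Gamma\setminus\!\!\setminus x\vdash^{(m,e)}\lambda x.t:\Gamma(x)\multimap L$; (@) from $\Gamma\vdash^{(m,e)} t : M\multimap L$ and $\Delta\vdash^{(m',e')} u : M\uplus[\mathtt{n}]$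 infer $\Gamma\uplus\Delta\vdash^{(m+m'+1,e+e')} tu : L$. *)

(* Defs.v *)
From Stdlib Require Import List Arith Permutation Relations.
Import ListNotations.

Inductive term : Type :=
| Var : nat -> term
| Lam : term -> term
| App : term -> term -> term.

Definition is_value (t : term) : Prop :=
  match t with Lam _ => True | _ => False end.

Fixpoint closed_at (k : nat) (t : term) : Prop :=
  match t with
  | Var n => n < k
  | Lam b => closed_at (S k) b
  | App a b => closed_at k a /\ closed_at k b
  end.

Definition closed (t : term) : Prop := closed_at 0 t.

Fixpoint lift (d c : nat) (t : term) : term :=
  match t with
  | Var n => if n <? c then Var n else Var (n + d)
  | Lam b => Lam (lift d (S c) b)
  | App a b => App (lift d c a) (lift d c b)
  end.

Fixpoint subst_at (j : nat) (u : term) (t : term) : term :=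
  match t with
  | Var n => if n =? j then lift j 0 u
             else if j <? n then Var (pred n) else Var n
  | Lam b => Lam (subst_at (S j) u b)
  | App a b => App (subst_at j u a) (subst_at j u b)
  end.

(* t{x := v} for the bound variable of an abstraction *)
Definition subst0 (t u : term) : term := subst_at 0 u t.

Inductive step_bv : term -> term -> Prop :=
| bv_root : forall t v, is_value v -> step_bv (App (Lam t) v) (subst0 t v)
| bv_appR : forall t u u', step_bv u u' -> step_bv (App t u) (App t u')
| bv_appL : forall t t' u, step_bv t t' -> step_bv (App t u) (App t' u).

Definition steps_bv : term -> term -> Prop := clos_refl_trans term step_bv.

(* linear types L ::= n | M -o L, multi types represented by lists
   (finite multisets, identified up to permutation via [eqL]/[eqM]) *)
Inductive ltype : Type :=
| Tn : ltype
| Tarr : list ltype -> ltype -> ltype.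

Definition mtype := list ltype.

(* equality of linear types, where multisets are compared up to reordering
   (recursively): this is equality of types-with-multisets *)
Inductive eqL : ltype -> ltype -> Prop :=
| eqL_n : eqL Tn Tn
| eqL_arr : forall (M M' M'' : mtype) (L L' : ltype),
    Permutation M' M'' -> Forall2 eqL M M'' -> eqL L L' ->
    eqL (Tarr M L) (Tarr M' L').

Definition eqM (M M' : mtype) : Prop :=
  exists M'', Permutation M' M'' /\ Forall2 eqL M M''.

(* type contexts: de Bruijn index -> multi type (finite support is automatic
   for contexts produced by derivations) *)
Definition tctx := nat -> mtype.
Definition ctx_empty : tctx := fun _ => [].
Definition ctx_single (x : nat) (L : ltype) : tctx :=
  fun y => if y =? x then [L] else [].
Definition ctx_union (G D : tctx) : tctx := fun y => G y ++ D y.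
(* Γ \\ x for the abstracted variable (index 0), followed by the de Bruijn
   shift of the remaining variables *)
Definition ctx_tail (G : tctx) : tctx := fun y => G (S y).

Inductive typ : tctx -> term -> ltype -> nat -> nat -> Prop :=
| ty_ax : forall x L, typ (ctx_single x L) (Var x) L 0 1
| ty_axlam : forall t, typ ctx_empty (Lam t) Tn 0 0
| ty_lam : forall G t L m e,
    typ G t L m e -> typ (ctx_tail G) (Lam t) (Tarr (G 0) L) m e
| ty_app : forall G D t u M M' L m e m' e',
    typ G t (Tarr M L) m e ->
    typM D u M' m' e' ->
    eqM M' (M ++ [Tn]) ->
    typ (ctx_union G D) (App t u) L (m + m' + 1) (e + e')
with typM : tctx -> term -> mtype -> nat -> nat -> Prop :=
| tyM_nil : forall t, typM ctx_empty t [] 0 0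
| tyM_cons : forall G D t L M m e m' e',
    typ G t L m e -> typM D t M m' e' ->
    typM (ctx_union G D) t (L :: M) (m + m') (e + e').

(* Main.v *)
Require Import Defs.
From Stdlib Require Import List Arith Lia Permutation Relations FunctionalExtensionality.
Import ListNotations.

Scheme typ_mut := Induction for typ Sort Prop
  with typM_mut := Induction for typM Sort Prop.

Lemma closed_mono : forall t k k', closed_at k t -> k <= k' -> closed_at k' t.
Proof.
  induction t; simpl; intros k k' H Hk.
  - lia.
  - apply (IHt (S k)); auto; lia.
  - destruct H; split; eauto.
Qed.

Lemma lift_closed : forall t d c k, closed_at k t -> k <= c -> lift d c t = t.
Proof.
  induction t; simpl; intros d c k H Hk.
  - destruct (Nat.ltb_spec n c); auto; lia.
  - f_equal; apply (IHt d (S c) (S k)); auto; lia.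
  - destruct H; f_equal; eauto.
Qed.

Lemma subst_closed : forall v, closed_at 0 v ->
  forall t j k, closed_at (S k) t -> j <= k -> closed_at k (subst_at j v t).
Proof.
  intros v Hv; induction t; simpl; intros j k H Hj.
  - destruct (Nat.eqb_spec n j).
    + rewrite (lift_closed v j 0 0); auto. apply (closed_mono v 0); auto; lia.
    + destruct (Nat.ltb_spec j n); simpl; lia.
  - apply IHt; auto; lia.
  - destruct H; split; auto.
Qed.

Lemma step_closed : forall t t', step_bv t t' -> closed t -> closed t'.
Proof.
  unfold closed; induction 1; simpl; intros Hc.
  - destruct Hc as [H1 H2]. unfold subst0. apply subst_closed; auto.
  - destruct Hc; split; auto.
  - destruct Hc; split; auto.
Qed.

Lemma typ_ctx_closed : forall G t L m e, typ G t L m e ->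
  forall k, closed_at k t -> forall y, k <= y -> G y = [].
Proof.
  apply (typ_mut (fun G t L m e _ => forall k, closed_at k t -> forall y, k <= y -> G y = [])
                 (fun G t M m e _ => forall k, closed_at k t -> forall y, k <= y -> G y = [])).
  - intros x L k H y Hy. unfold ctx_single. simpl in H.
    destruct (Nat.eqb_spec y x); auto; lia.
  - intros; reflexivity.
  - intros G t L m e _ IH k H y Hy. unfold ctx_tail. apply (IH (S k)); auto; lia.
  - intros G D t u M M' L m e m' e' _ IH1 _ IH2 _ k [H1 H2] y Hy.
    unfold ctx_union. rewrite (IH1 k H1 y Hy), (IH2 k H2 y Hy). reflexivity.
  - intros; reflexivity.
  - intros G D t L M m e m' e' _ IH1 _ IH2 k H y Hy.
    unfold ctx_union. rewrite (IH1 k H y Hy), (IH2 k H y Hy). reflexivity.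
Qed.

Lemma typ_closed_empty : forall G t L m e, typ G t L m e -> closed t -> G = ctx_empty.
Proof.
  intros. extensionality y. apply (typ_ctx_closed _ _ _ _ _ H 0); auto; lia.
Qed.

Lemma typM_app : forall G v M1 m e, typM G v M1 m e ->
  forall D M2 m' e', typM D v M2 m' e' ->
  exists m'' e'', typM (ctx_union G D) v (M1 ++ M2) m'' e''.
Proof.
  induction 1; intros D0 M2 m0 e0 H2.
  - exists m0, e0. exact H2.
  - destruct (IHtypM _ _ _ _ H2) as [m1 [e1 H3]].
    eexists; eexists.
    replace (ctx_union (ctx_union G D) D0) with (ctx_union G (ctx_union D D0)).
    + simpl. apply tyM_cons; eauto.
    + extensionality y; unfold ctx_union; apply app_assoc.
Qed.

Definition ins (j : nat) (M : mtype) (G : tctx) : tctx :=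
  fun y => if y <? j then G y else if y =? j then M else G (pred y).

Lemma ins_union : forall j M1 M2 G D,
  ins j (M1 ++ M2) (ctx_union G D) = ctx_union (ins j M1 G) (ins j M2 D).
Proof.
  intros; extensionality y; unfold ins, ctx_union.
  destruct (y <? j); auto. destruct (y =? j); auto.
Qed.

Lemma ins_empty : forall j, ins j [] ctx_empty = ctx_empty.
Proof.
  intros; extensionality y; unfold ins, ctx_empty.
  destruct (y <? j); auto. destruct (y =? j); auto.
Qed.

Section Anti.
Variable v : term.
Hypothesis Hv : closed v.

Definition AS_typ (t : term) := forall j G L m e, typ G (subst_at j v t) L m e ->
  exists M m' e' mv ev, typ (ins j M G) t L m' e' /\ typM ctx_empty v M mv ev.

Lemma anti_typM : forall t, AS_typ t -> forall j D M' m e,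
  typM D (subst_at j v t) M' m e ->
  exists M m' e' mv ev, typM (ins j M D) t M' m' e' /\ typM ctx_empty v M mv ev.
Proof.
  intros t IH j D M' m e H. remember (subst_at j v t) as s eqn:Es.
  induction H.
  - exists [], 0, 0, 0, 0. rewrite ins_empty. split; constructor.
  - subst. destruct (IH _ _ _ _ _ H) as [Ma [m1 [e1 [ma [ea [Ha Hva]]]]]].
    destruct IHtypM as [Mb [m2 [e2 [mb [eb [Hb Hvb]]]]]]; auto.
    destruct (typM_app _ _ _ _ _ Hva _ _ _ _ Hvb) as [mc [ec Hc]].
    exists (Ma ++ Mb), (m1 + m2), (e1 + e2), mc, ec. split.
    + rewrite ins_union. constructor; auto.
    + exact Hc.
Qed.

Lemma anti_subst : forall t, AS_typ t.
Proof.
  induction t; unfold AS_typ; simpl; intros j G L m e H.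
  - destruct (Nat.eqb_spec n j).
    + subst n. rewrite (lift_closed v j 0 0) in H; auto.
      pose proof (typ_closed_empty _ _ _ _ _ H Hv). subst G.
      exists [L], 0, 1, (m + 0), (e + 0). split.
      * replace (ins j [L] ctx_empty) with (ctx_single j L). constructor.
        extensionality y; unfold ins, ctx_single, ctx_empty.
        destruct (Nat.ltb_spec y j); destruct (Nat.eqb_spec y j); auto; lia.
      * replace (@ctx_empty) with (ctx_union ctx_empty ctx_empty) by reflexivity.
        econstructor; eauto. constructor.
    + exists [], 0, 1, 0, 0. split; [|constructor].
      destruct (Nat.ltb_spec j n) as [Hjn|Hjn];
      [remember (Var (pred n)) as w eqn:Ew | remember (Var n) as w eqn:Ew];
      destruct H; try discriminate;
      injection Ew as Ew; subst x;
      (replace (ins j [] (ctx_single _ L)) with (ctx_single n L); [apply ty_ax|]);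
      extensionality y; unfold ins, ctx_single;
      destruct (Nat.ltb_spec y j); destruct (Nat.eqb_spec y j);
      destruct (Nat.eqb_spec y n); destruct (Nat.eqb_spec y (pred n));
      destruct (Nat.eqb_spec (pred y) (pred n)); destruct (Nat.eqb_spec (pred y) n);
      auto; try lia.
  - remember (Lam (subst_at (S j) v t)) as w eqn:Ew.
    destruct H; try discriminate.
    + exists [], 0, 0, 0, 0. rewrite ins_empty. split; constructor.
    + injection Ew as Ew; subst t0.
      destruct (IHt _ _ _ _ _ H) as [M [m' [e' [mv [ev [H1 H2]]]]]].
      exists M, m', e', mv, ev. split; auto.
      replace (ins j M (ctx_tail G)) with (ctx_tail (ins (S j) M G)).
      replace (G 0) with (ins (S j) M G 0).
      * constructor; auto.
      * reflexivity.
      * extensionality y; unfold ins, ctx_tail.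
        destruct (Nat.ltb_spec (S y) (S j)); destruct (Nat.ltb_spec y j);
        destruct (Nat.eqb_spec (S y) (S j)); destruct (Nat.eqb_spec y j); try lia; auto.
        simpl. f_equal. lia.
  - remember (App (subst_at j v t1) (subst_at j v t2)) as w eqn:Ew.
    destruct H; try discriminate.
    injection Ew as E1 E2; subst t u.
    destruct (IHt1 _ _ _ _ _ H) as [Ma [m1 [e1 [ma [ea [Ha Hva]]]]]].
    destruct (anti_typM t2 IHt2 _ _ _ _ _ H0) as [Mb [m2 [e2 [mb [eb [Hb Hvb]]]]]].
    destruct (typM_app _ _ _ _ _ Hva _ _ _ _ Hvb) as [mc [ec Hc]].
    exists (Ma ++ Mb), (m1 + m2 + 1), (e1 + e2), mc, ec. split; auto.
    rewrite ins_union. econstructor; eauto.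
Qed.
End Anti.

Fixpoint eqL_refl (L : ltype) : eqL L L :=
  match L with
  | Tn => eqL_n
  | Tarr M L0 => eqL_arr M M M L0 L0 (Permutation_refl M)
      ((fix F (l : list ltype) : Forall2 eqL l l :=
          match l with [] => Forall2_nil _ | x :: r => Forall2_cons _ _ (eqL_refl x) (F r) end) M)
      (eqL_refl L0)
  end.

Lemma Forall2_eqL_refl : forall l, Forall2 eqL l l.
Proof. induction l; constructor; auto using eqL_refl. Qed.

Lemma eqM_refl : forall M, eqM M M.
Proof. intros M; exists M; split; auto using Forall2_eqL_refl. Qed.

Lemma lift_typM : forall u w, (forall G L m e, typ G w L m e -> exists m' e', typ G u L m' e') ->
  forall D M m e, typM D w M m e -> exists m' e', typM D u M m' e'.
Proof.
  intros u w IH D M m e HM. revert IH. induction HM; intros IH.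
  - exists 0, 0; constructor.
  - destruct (IH _ _ _ _ H) as [m1 [e1 Ha]].
    destruct (IHHM IH) as [m2 [e2 Hb]].
    eexists; eexists; econstructor; eauto.
Qed.

Lemma expansion : forall t t', step_bv t t' -> closed t ->
  forall G L m e, typ G t' L m e -> exists m' e', typ G t L m' e'.
Proof.
  induction 1; intros Hc G L m e HT.
  - destruct Hc as [H1 H2].
    destruct (anti_subst v H2 t 0 G L m e HT) as [M [m' [e' [mv [ev [Ht Hvv]]]]]].
    assert (Hn : typM ctx_empty v [Tn] 0 0).
    { destruct v; try contradiction.
      exact (tyM_cons ctx_empty ctx_empty (Lam v) Tn [] 0 0 0 0 (ty_axlam v) (tyM_nil _)). }
    destruct (typM_app _ _ _ _ _ Hvv _ _ _ _ Hn) as [mc [ec Hc]].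
    exists (m' + mc + 1), (e' + ec).
    replace G with (ctx_union (ctx_tail (ins 0 M G)) (ctx_union ctx_empty ctx_empty)).
    + econstructor.
      * apply ty_lam. exact Ht.
      * exact Hc.
      * apply eqM_refl.
    + extensionality y; unfold ctx_union, ctx_tail, ins, ctx_empty; simpl.
      apply app_nil_r.
  - destruct Hc as [H1 H2].
    remember (App t u') as w eqn:Ew. destruct HT; try discriminate.
    injection Ew as E1 E2; subst t0 u0.
    assert (HM : forall D M' m e, typM D u' M' m e -> exists m0 e0, typM D u M' m0 e0).
    { intros D0 M0 m0 e0 HM. eapply lift_typM; [|exact HM]; intros; eapply IHstep_bv; eauto. }
    destruct (HM _ _ _ _ H0) as [m1 [e1 Hb]].
    eexists; eexists; econstructor; eauto.
  - destruct Hc as [H1 H2].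
    remember (App t' u) as w eqn:Ew. destruct HT; try discriminate.
    injection Ew as E1 E2; subst t0 u0.
    destruct (IHstep_bv H1 _ _ _ _ HT) as [m1 [e1 Ha]].
    eexists; eexists; econstructor; eauto.
Qed.

Theorem theorem7p4 (t v : term) :
  closed t -> is_value v -> steps_bv t v ->
  exists (G : tctx) (m e : nat), (forall x, G x = nil) /\ typ G t Tn m e.
Proof.
  intros Hc Hv Hs. exists ctx_empty.
  apply clos_rt_rt1n in Hs. induction Hs.
  - destruct x; try contradiction. exists 0, 0. split; [reflexivity|constructor].
  - destruct (IHHs (step_closed _ _ H Hc) Hv) as [m [e [_ Ht]]].
    destruct (expansion _ _ H Hc _ _ _ _ Ht) as [m' [e' Ht']].
    exists m', e'. split; [reflexivity|exact Ht'].
Qed.
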